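(* Let $A_1,\dots,A_k$ be $n$-dimensional boxes and $\mathcal{O}$ a set of orders of them (innermost to outermost) each of which would be a possible arrangement if the expansion bound were dropped, i.e. if an expanded side $a_i$ were allowed to take any length $a_i'\ge a_i$. Then there exist $n$-dimensional boxes $A'_1,\dots,A'_k$ such that every order in $\mathcal{O}$ (with corresponding labels) is a possible arrangement with the expansion bound $a_i'\le 2a_i$ in force.
   Context: An $n$-dimensional box $A$ has closed side lengths $a_1\le\dots\le a_n$ (positive reals). A state of $A$ is either closed or expanded along one side $i$: $a_i$ is replaced by $a_i'$ with $a_i\le a_i'$, other sides unchanged (only one side can expand); the expansion bound is the additional requirement $a_i'\le 2a_i$. The dimension vector of a state is its side lengths sorted non-decreasingly. A box in some state fits inside another box in some state if each coordinate of the outer one's dimension vector is strictly larger than the corresponding coordinate of the inner one's. An order $X_1,\dots,X_k$ (innermost to outermost) is a possible arrangement if each box can be given a state so that $X_j$ fits inside $X_{j+1}$ for all $j$; states may differ between arrangements. *)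

(* Defs.v *)
From HB Require Import structures.
From mathcomp Require Import all_boot all_order all_algebra.
From mathcomp Require Import reals.
Set Implicit Arguments. Unset Strict Implicit. Unset Printing Implicit Defensive.
Import Order.TTheory GRing.Theory Num.Theory.
Local Open Scope ring_scope.

(* An n-dimensional box is given by its closed side lengths, a function
   'I_n -> R (the labelling of the sides is irrelevant: only the sorted
   dimension vector matters). *)
Definition box (R : realType) (n : nat) := 'I_n -> R.

Definition is_box (R : realType) (n : nat) (a : box R n) : Prop :=
  forall i, 0 < a i.

Definition is_state (R : realType) (n : nat) (bnd : bool) (a b : box R n) : Prop :=
  b = a \/
  exists i : 'I_n, [/\ a i <= b i, (bnd -> b i <= 2 * a i) &
                      forall j : 'I_n, j != i -> b j = a j].

Definition dimvec (R : realType) (n : nat) (b : box R n) : seq R :=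
  sort <=%R [seq b i | i <- enum 'I_n].

Definition fits (R : realType) (n : nat) (inner outer : box R n) : bool :=
  all2 (fun x y => x < y) (dimvec inner) (dimvec outer).

Definition possible_arrangement (R : realType) (n k : nat) (bnd : bool)
    (A : 'I_k -> box R n) (o : seq 'I_k) : Prop :=
  exists st : 'I_k -> box R n,
    (forall j, is_state bnd (A j) (st j)) /\
    sorted (fun x y => fits (st x) (st y)) o.

(* Main.v *)
Require Import Defs.
From HB Require Import structures.
From mathcomp Require Import all_boot all_order all_algebra.
From mathcomp Require Import reals.
From mathcomp Require Import ring lra.
Set Implicit Arguments. Unset Strict Implicit.
Import Order.TTheory GRing.Theory Num.Theory.
Local Open Scope ring_scope.

Section Aux.
Variable R : realType.

Definition fsq (x : R) : R := 2 - (1 + x)^-1.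

Lemma fsq_inv_pos (x : R) : 0 < x -> 0 < (1 + x)^-1.
Proof. by move=> hx; rewrite invr_gt0; lra. Qed.

Lemma fsq_gt1 (x : R) : 0 < x -> 1 < fsq x.
Proof.
move=> hx; rewrite /fsq.
have : (1 + x)^-1 < 1 by rewrite invf_lt1; lra.
lra.
Qed.

Lemma fsq_lt2 (x : R) : 0 < x -> fsq x < 2.
Proof. move=> hx; have := fsq_inv_pos hx; rewrite /fsq; lra. Qed.

Lemma fsq_diff (x y : R) : 0 < x -> 0 < y ->
  fsq y - fsq x = (y - x) / ((1 + x) * (1 + y)).
Proof.
move=> hx hy; rewrite /fsq; field.
apply/andP; split; rewrite lt0r_neq0 //; lra.
Qed.

Lemma fsq_lt (x y : R) : 0 < x -> 0 < y -> x < y -> fsq x < fsq y.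
Proof.
move=> hx hy hxy; rewrite -subr_gt0 fsq_diff // divr_gt0 //; first lra.
by apply: mulr_gt0; lra.
Qed.

Lemma fsq_le (x y : R) : 0 < x -> 0 < y -> x <= y -> fsq x <= fsq y.
Proof.
move=> hx hy; rewrite le_eqVlt => /orP[/eqP->//|h].
by apply/ltW/fsq_lt.
Qed.

Lemma dimvec_fsq n (b : box R n) : (forall i, 0 < b i) ->
  dimvec (fun i => fsq (b i)) = map fsq (dimvec b).
Proof.
move=> hb; rewrite /dimvec.
set s := [seq b i | i <- enum 'I_n].
have -> : [seq fsq (b i) | i <- enum 'I_n] = map fsq s by rewrite /s -map_comp.
have allp : all (fun x => 0 < x) s by apply/allP => x /mapP[i _ ->].
apply: (sorted_eq (@le_trans _ R) (@le_anti _ R)).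
- by apply: sort_sorted => x y; apply: le_total.
- apply: (@homo_sorted_in _ _ (fun x : R => 0 < x)).
  + by move=> x y hx hy; apply: fsq_le.
  + by rewrite all_sort.
  + by apply: sort_sorted => x y; apply: le_total.
- by rewrite perm_sort perm_map // perm_sym perm_sort.
Qed.

Lemma all2_fsq (s t : seq R) : all (fun x => 0 < x) s -> all (fun x => 0 < x) t ->
  all2 (fun x y => x < y) s t -> all2 (fun x y => x < y) (map fsq s) (map fsq t).
Proof.
elim: s t => [|x s IH] [|y t] //= /andP[hx hs] /andP[hy ht] /andP[hxy h].
by rewrite fsq_lt //= IH.
Qed.

End Aux.

Theorem proposition25 (R : realType) (n k : nat) (A : 'I_k -> box R n)
    (O : seq 'I_k -> Prop) :
  (forall j, is_box (A j)) ->
  (forall o, O o -> perm_eq o (enum 'I_k) /\ possible_arrangement false A o) ->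
  exists A' : 'I_k -> box R n,
    (forall j, is_box (A' j)) /\
    (forall o, O o -> possible_arrangement true A' o).
Proof.
move=> hA hO.
exists (fun j i => fsq (A j i)); split.
  by move=> j i; apply: lt_trans (fsq_gt1 (hA j i)).
move=> o /hO [_ [st [hst hsort]]].
have stpos : forall j i, 0 < st j i.
  move=> j i; case: (hst j) => [->|[i0 [h1 _ h3]]]; first exact: hA.
  have [->|ne] := eqVneq i i0; first exact: lt_le_trans (hA j i0) h1.
  by rewrite h3 //; apply: hA.
exists (fun j i => fsq (st j i)); split.
  move=> j; case: (hst j) => [->|[i0 [h1 _ h3]]]; first by left.
  right; exists i0; split.
  - by apply: fsq_le => //; apply: hA.
  - move=> _; apply: ltW; apply: lt_trans (fsq_lt2 (stpos j i0)) _.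
    have := fsq_gt1 (hA j i0); lra.
  - by move=> j0 /h3 ->.
apply: sub_sorted hsort => x y.
rewrite /fits !dimvec_fsq //.
have allp : forall j, all (fun x => 0 < x) (dimvec (st j)).
  by move=> j; rewrite /dimvec all_sort; apply/allP => z /mapP[i _ ->].
by apply: all2_fsq.
Qed.
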